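(* Let $G$ be a graph with $k=\chi(G)$ that has, up to permutation of the colours, exactly two proper $k$-colourings (i.e. exactly two partitions of $V(G)$ into $k$ independent sets). Then for every proper $k$-colouring $c$ of $G$ there exists a critical set for $(G,c)$ of cardinality $\chi(G)$.
   Context: All graphs are finite and simple. A proper $k$-colouring of $G=(V,E)$ is a map $c:V\to[k]$ with $c(u)\neq c(v)$ for every edge $uv$. A set $S\subseteq V$ is a determining set for $(G,c)$ if there is no proper $k$-colouring $c'\neq c$ of $G$ with $c'(s)=c(s)$ for all $s\in S$; a critical set for $(G,c)$ is an inclusion-minimal determining set. *)

(* Defs.v *)
From mathcomp Require Import all_boot.
Set Implicit Arguments. Unset Strict Implicit. Unset Printing Implicit Defensive.

Definition simple_graph (T : finType) (e : rel T) : Prop :=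
  irreflexive e /\ symmetric e.

Definition proper_colouring (T : finType) (e : rel T) (k : nat)
  (c : {ffun T -> 'I_k}) : Prop :=
  forall u v, e u v -> c u != c v.

Definition proper_colouringb (T : finType) (e : rel T) (k : nat)
  (c : {ffun T -> 'I_k}) : bool :=
  [forall u, forall v, e u v ==> (c u != c v)].

Definition is_chromatic_number (T : finType) (e : rel T) (k : nat) : Prop :=
  (exists c : {ffun T -> 'I_k}, proper_colouring e c) /\
  (forall j, j < k -> forall c : {ffun T -> 'I_j}, ~ proper_colouring e c).

Definition colour_partition (T : finType) (k : nat) (c : {ffun T -> 'I_k})
  : {set {set T}} :=
  [set [set x | c x == i] | i : 'I_k] :\ set0.

(* the set of partitions of V coming from proper k-colourings,
   i.e. the proper k-colourings up to permutation of colours *)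
Definition colouring_partitions (T : finType) (e : rel T) (k : nat)
  : {set {set {set T}}} :=
  [set colour_partition c | c in [pred c : {ffun T -> 'I_k} | proper_colouringb e c]].

Definition determining (T : finType) (e : rel T) (k : nat)
  (c : {ffun T -> 'I_k}) (S : {set T}) : Prop :=
  forall c' : {ffun T -> 'I_k}, proper_colouring e c' ->
    (forall s, s \in S -> c' s = c s) -> c' = c.

Definition critical (T : finType) (e : rel T) (k : nat)
  (c : {ffun T -> 'I_k}) (S : {set T}) : Prop :=
  determining e c S /\ (forall S' : {set T}, S' \proper S -> ~ determining e c S').

(* Main.v *)
Require Import Defs.
From mathcomp Require Import all_boot.
From mathcomp Require Import zify.
Set Implicit Arguments. Unset Strict Implicit. Unset Printing Implicit Defensive.

Definition nbh (A B : finType) (R : A -> B -> bool) (As : {set A}) (Y : {set B}) : {set A} :=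
  [set a in As | [exists y in Y, R a y]].

Lemma hall (A B : finType) (R : A -> B -> bool) (a0 : A) : forall n (As : {set A}) (Bs : {set B}),
  #|Bs| <= n ->
  (forall Y : {set B}, Y \subset Bs -> #|Y| <= #|nbh R As Y|) ->
  exists f : B -> A, {in Bs &, injective f} /\ forall b, b \in Bs -> (f b \in As) && R (f b) b.
Proof.
elim=> [|n IH] As Bs.
  rewrite leqn0 cards_eq0 => /eqP -> _; exists (fun _ => a0); split=> [x y|b]; by rewrite inE.
move=> hBs hall.
case: (boolP [exists Y : {set B}, [&& Y \subset Bs, Y != set0, Y != Bs & #|nbh R As Y| <= #|Y|]]).
  case/existsP=> Y0 /and4P [sY0 nY0 pY0 tY0].
  have ltY0 : #|Y0| < #|Bs| by rewrite ltnNge; apply: contra pY0 => h; rewrite eqEcard sY0 h.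
  have [f1 [inj1 h1]] := IH As Y0 (leq_trans ltY0 (hBs)) (fun Y sY => hall Y (subset_trans sY sY0)).
  set As' := As :\: nbh R As Y0.
  have hB' : #|Bs :\: Y0| <= n.
    have := cardsD Bs Y0; rewrite (setIidPr sY0).
    have : 0 < #|Y0| by rewrite card_gt0.
    move=> h1' ->; lia.
  have hall2 : forall Z : {set B}, Z \subset Bs :\: Y0 -> #|Z| <= #|nbh R As' Z|.
    move=> Z sZ.
    have sZB : Z \subset Bs by apply: subset_trans sZ (subsetDl _ _).
    have dZ : [disjoint Z & Y0].
      by rewrite disjoints_subset; apply: subset_trans sZ _; apply/subsetP=> y; rewrite !inE => /andP [].
    have dZ' : Z :&: Y0 = set0 by apply/eqP; rewrite setI_eq0.
    have h : #|Z :|: Y0| <= #|nbh R As (Z :|: Y0)| by apply: hall; rewrite subUset sZB sY0.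
    rewrite cardsU dZ' cards0 subn0 in h.
    have sub : nbh R As (Z :|: Y0) \subset nbh R As' Z :|: nbh R As Y0.
      apply/subsetP=> a; rewrite !inE => /andP [aA /existsP [y /andP [yZY Ray]]].
      case: (boolP [exists y in Y0, R a y]) => hY; first by rewrite aA orbT.
      rewrite aA andbF orbF /=; apply/existsP; exists y.
      move: yZY; rewrite inE => /orP [yZ|yY]; first by rewrite yZ Ray.
      by case/negP: hY; apply/existsP; exists y; rewrite yY.
    have := subset_leq_card sub; rewrite cardsU.
    move: h; lia.
  have [f2 [inj2 h2]] := IH As' (Bs :\: Y0) hB' hall2.
  exists (fun b => if b \in Y0 then f1 b else f2 b); split.
    move=> x y xB yB /=.
    case: ifP => xY; case: ifP => yY.
    - exact: inj1.
    - move=> E; have := h2 y; rewrite inE yY yB => /(_ isT) /andP [].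
      rewrite -E inE => /andP [] /negP nN _ _; case: nN.
      have /andP [fA fR] := h1 x xY.
      by rewrite inE fA; apply/existsP; exists x; rewrite xY.
    - move=> E; have := h2 x; rewrite inE xY xB => /(_ isT) /andP [].
      rewrite E inE => /andP [] /negP nN _ _; case: nN.
      have /andP [fA fR] := h1 y yY.
      by rewrite inE fA; apply/existsP; exists y; rewrite yY.
    - by apply: inj2; rewrite inE ?xY ?yY.
  move=> b bB; case: ifP => bY; first exact: h1.
  have := h2 b; rewrite inE bY bB => /(_ isT) /andP [].
  by rewrite inE => /andP [_ ->] ->.
rewrite negb_exists => /forallP notight.
case: (set_0Vmem Bs) => [B0|[b0 b0B]].
  by exists (fun _ => a0); split=> [x y|b]; rewrite B0 inE.
have := hall [set b0]; rewrite sub1set b0B cards1 => /(_ isT).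
rewrite card_gt0 => /set0Pn [a1]; rewrite inE => /andP [a1A /existsP [y1]].
rewrite inE => /andP [/eqP E1 Ra1]. rewrite {y1}E1 in Ra1.
have hB' : #|Bs :\ b0| <= n by rewrite (cardsD1 b0 Bs) b0B in hBs.
have hall2 : forall Z : {set B}, Z \subset Bs :\ b0 -> #|Z| <= #|nbh R (As :\ a1) Z|.
  move=> Z sZ.
  case: (boolP (Z == set0)) => [/eqP ->|nZ]; first by rewrite cards0.
  have sZB : Z \subset Bs by apply: subset_trans sZ (subsetDl _ _).
  have ZB : Z != Bs by apply/eqP=> E; move/subsetP: sZ => /(_ b0); rewrite E b0B !inE eqxx => /(_ isT).
  have := notight Z; rewrite sZB nZ ZB /= -ltnNge => lt.
  have sub : nbh R As Z :\ a1 \subset nbh R (As :\ a1) Z.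
    by apply/subsetP=> a; rewrite !inE => /andP [-> /andP [-> ->]].
  have := subset_leq_card sub.
  have := cardsD1 a1 (nbh R As Z).
  move: lt; case: (a1 \in nbh R As Z); lia.
have [f2 [inj2 h2]] := IH (As :\ a1) (Bs :\ b0) hB' hall2.
exists (fun b => if b == b0 then a1 else f2 b); split.
  move=> x y xB yB /=.
  have mem : forall z, z \in Bs -> z != b0 -> f2 z != a1.
    move=> z zB zb; have zB' : z \in Bs :\ b0 by rewrite !inE zB zb.
    by have /andP [] := h2 z zB'; rewrite !inE => /andP [].
  case: eqP => [->|/eqP xb]; case: eqP => [->|/eqP yb] //.
  - by move=> E; have := mem y yB yb; rewrite -E eqxx.
  - by move=> E; have := mem x xB xb; rewrite E eqxx.
  - by apply: inj2; rewrite !inE ?xb ?yb ?xB ?yB.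
move=> b bB; case: eqP => [->|/eqP bb]; first by rewrite a1A.
have bB' : b \in Bs :\ b0 by rewrite !inE bB bb.
by have /andP [] := h2 b bB'; rewrite !inE => /andP [_ ->] ->.
Qed.

Lemma proper_colP (T : finType) (e : rel T) k (c : {ffun T -> 'I_k}) :
  reflect (proper_colouring e c) (proper_colouringb e c).
Proof.
apply: (iffP forallP) => [h u v euv | h u]; first by have /forallP/(_ v)/implyP := h u; apply.
by apply/forallP => v; apply/implyP; apply: h.
Qed.

Lemma part_ker (T : finType) k (c c' : {ffun T -> 'I_k}) :
  colour_partition c = colour_partition c' -> forall x y, (c x == c y) = (c' x == c' y).
Proof.
move=> E x y.
have : [set z | c z == c x] \in colour_partition c.
  rewrite /colour_partition in_setD1 imset_f ?andbT //.
  by apply/set0Pn; exists x; rewrite inE.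
rewrite E /colour_partition in_setD1 => /andP [_ /imsetP [i _ Ei]].
have xi : c' x = i by move/setP: Ei => /(_ x); rewrite !inE eqxx => /esym/eqP.
move/setP: Ei => /(_ y); rewrite !inE eq_sym => ->.
by rewrite -xi eq_sym.
Qed.

Lemma ker_part_sub (T : finType) k (c c' : {ffun T -> 'I_k}) :
  (forall x y, (c x == c y) = (c' x == c' y)) ->
  colour_partition c \subset colour_partition c'.
Proof.
move=> K; apply/subsetP => C; rewrite /colour_partition !in_setD1 => /andP [nC /imsetP [i _ Ei]].
rewrite nC /=.
have [x0 x0C] := set0Pn _ nC.
have cx0 : c x0 = i by move: x0C; rewrite Ei inE => /eqP.
apply/imsetP; exists (c' x0) => //.
by rewrite Ei; apply/setP => z; rewrite !inE -cx0 K.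
Qed.

Lemma ker_part (T : finType) k (c c' : {ffun T -> 'I_k}) :
  (forall x y, (c x == c y) = (c' x == c' y)) ->
  colour_partition c = colour_partition c'.
Proof.
move=> K; apply/eqP; rewrite eqEsubset !ker_part_sub // => x y; by rewrite K.
Qed.

Lemma chi_le (T : finType) (e : rel T) k (X : finType) (d : T -> X) :
  is_chromatic_number e k -> (forall u v, e u v -> d u != d v) ->
  k <= #|d @: [set: T]|.
Proof.
move=> [_ chi] dP; rewrite leqNgt; apply/negP => lt.
apply: (chi _ lt [ffun x => enum_rank_in (imset_f d (in_setT x)) (d x)]).
move=> u v /dP; apply: contra; rewrite !ffunE => /eqP /(congr1 enum_val).
by rewrite (enum_rankK_in _ (imset_f d (in_setT u))) ?imset_f // (enum_rankK_in _ (imset_f d (in_setT v))) ?imset_f // => ->.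
Qed.

Lemma transversal (T : finType) (e : rel T) k (c c2 : {ffun T -> 'I_k}) (a0 : 'I_k) :
  is_chromatic_number e k -> proper_colouring e c -> proper_colouring e c2 ->
  exists f : 'I_k -> 'I_k, injective f /\ forall j, [exists x, (c x == j) && (c2 x == f j)].
Proof.
move=> chi cP c2P.
pose R := fun a j => [exists x, (c x == j) && (c2 x == a)].
have H : forall Y : {set 'I_k}, Y \subset setT -> #|Y| <= #|nbh R setT Y|.
  move=> Y _; rewrite leqNgt; apply/negP => lt.
  pose d x := if c x \in Y then inl (c2 x) else @inr 'I_k 'I_k (c x).
  have dP : forall u v, e u v -> d u != d v.
    move=> u v euv; rewrite /d; case: ifP => _; case: ifP => _ //=.
    - exact: c2P.
    - exact: cP.
  have := chi_le chi dP.
  have sub : d @: [set: T] \subset (inl @: nbh R setT Y) :|: (inr @: ~: Y).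
    apply/subsetP => z /imsetP [x _ ->]; rewrite /d; case: ifP => xY; rewrite inE.
      rewrite imset_f //; rewrite /nbh !inE /=; apply/existsP; exists (c x); rewrite xY /=.
      by apply/existsP; exists x; rewrite !eqxx.
    by rewrite orbC imset_f // inE xY.
  have := subset_leq_card sub; rewrite cardsU (card_imset _ inl_inj) (card_imset _ inr_inj).
  have := cardsC Y; rewrite card_ord.
  move: lt; set N0 := #|nbh _ _ _|; set y0 := #|Y|; set z0 := #|~: Y|; set w0 := #|_ :&: _|; set i0 := #|[set d x | x in _]|; lia.
have hk : #|[set: 'I_k]| <= k by rewrite cardsT card_ord.
have [f [finj fR]] := @hall _ _ R a0 k setT setT hk H.
exists f; split; first by move=> x y; apply: finj; rewrite inE.
by move=> j; have /andP [_ ] := fR j (in_setT j).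
Qed.

Definition swp k (j l x : 'I_k) : 'I_k := if x == j then l else if x == l then j else x.

Lemma swpK k (j l : 'I_k) : involutive (swp j l).
Proof.
move=> x; rewrite /swp.
case: (eqVneq x j) => [xj|xj].
  case: (eqVneq l j) => [lj|lj]; first by rewrite xj lj.
  by rewrite eqxx xj.
case: (eqVneq x l) => [xl|xl].
  by rewrite eqxx xl.
by rewrite (negbTE xj) (negbTE xl).
Qed.

Lemma swp_inj k (j l : 'I_k) : injective (swp j l).
Proof. exact: inv_inj (swpK j l). Qed.

Lemma comp_proper (T : finType) (e : rel T) k (c : {ffun T -> 'I_k}) (h : 'I_k -> 'I_k) :
  injective h -> proper_colouring e c -> proper_colouring e [ffun x => h (c x)].
Proof. by move=> hi cP u v euv; rewrite !ffunE (inj_eq hi); apply: cP. Qed.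

Theorem proposition8 (T : finType) (e : rel T) (k : nat) :
  simple_graph e ->
  is_chromatic_number e k ->
  #|colouring_partitions e k| = 2 ->
  forall c : {ffun T -> 'I_k}, proper_colouring e c ->
    exists S : {set T}, critical e c S /\ #|S| = k.
Proof.
move=> _ chi hcard c cP.
have inCP : forall c' : {ffun T -> 'I_k}, proper_colouring e c' ->
    colour_partition c' \in colouring_partitions e k.
  by move=> c' c'P; apply: imset_f; rewrite inE; apply/proper_colP.
have P1in := inCP c cP.
have : #|colouring_partitions e k :\ colour_partition c| == 1.
  by have := cardsD1 (colour_partition c) (colouring_partitions e k); rewrite P1in hcard => -[->].
case/cards1P => P2 EP2.
have : P2 \in colouring_partitions e k :\ colour_partition c by rewrite EP2 set11.
rewrite in_setD1 => /andP [P2P1 /imsetP [c2 c2b EP2']].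
have c2P : proper_colouring e c2 by apply/proper_colP; move: c2b; rewrite inE.
have two : forall c'' : {ffun T -> 'I_k}, proper_colouring e c'' ->
    colour_partition c'' = colour_partition c \/ colour_partition c'' = colour_partition c2.
  move=> c'' c''P; case: (eqVneq (colour_partition c'') (colour_partition c)) => [->|ne]; first by left.
  right; rewrite -EP2'; apply/set1P; rewrite -EP2 in_setD1 ne; exact: inCP.
have [x0 _] : exists x0 : T, True.
  case: (pickP (fun x => c2 x != c x)) => [x0 _|h]; first by exists x0.
  case/eqP: P2P1; rewrite EP2'; congr colour_partition; apply/ffunP => x.
  by have := h x; rewrite /= => /negbFE/eqP.
have [f [finj fR]] := transversal (c x0) chi cP c2P.
have [t ht] : exists t : 'I_k -> T, forall j, c (t j) = j /\ c2 (t j) = f j.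
  exists (fun j => xchoose (existsP (fR j))) => j.
  by have /andP [/eqP -> /eqP ->] := xchooseP (existsP (fR j)).
pose g := invF finj.
pose c' := [ffun x => g (c2 x)].
have c'P : proper_colouring e c' := comp_proper (can_inj (f_invF finj)) c2P.
have c't : forall j, c' (t j) = j by move=> j; rewrite ffunE (ht j).2 /g invF_f.
have kc' : forall x y, (c2 x == c2 y) = (c' x == c' y).
  by move=> x y; rewrite !ffunE (inj_eq (can_inj (f_invF finj))).
have [b cb] : exists b, c' b != c b.
  case: (pickP (fun x => c' x != c x)) => [b hb|h]; first by exists b.
  case/eqP: P2P1; rewrite EP2'; apply: esym; apply: ker_part => x y.
  have : c' = c by apply/ffunP => z; have := h z; rewrite /= => /negbFE/eqP.
  by move=> E; rewrite kc' E.
set i := c b; set l := c' b.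
have tinj : injective t by move=> x y E; rewrite -(ht x).1 -(ht y).1 E.
have bnt : forall j, b != t j by move=> j; apply/eqP => E; move: cb; rewrite E c't (ht j).1 eqxx.
pose S := b |: (t @: [set~ l]).
have inS : forall s, s \in S -> s = b \/ exists2 j, j != l & s = t j.
  move=> s; rewrite !inE => /orP [/eqP ->|/imsetP [j]]; first by left.
  by rewrite !inE => jl ->; right; exists j.
have il : i != l by rewrite eq_sym.
exists S; split; last first.
  rewrite cardsU1 (card_imset _ tinj) cardsC1 card_ord.
  have -> : b \notin t @: [set~ l] by apply/imsetP => -[j _ E]; move: (bnt j); rewrite E eqxx.
  have := ltn_ord l; rewrite /= add1n; lia.
split.
  move=> c'' c''P agree.
  case: (two c'' c''P) => E; move: (part_ker E) => K.
    apply/ffunP => x.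
    case: (eqVneq (c x) l) => [cxl|cxl].
      apply/eqP; rewrite cxl; apply/negPn/negP => ne.
      have tS : t (c'' x) \in S by rewrite !inE imset_f ?orbT // !inE.
      have := agree _ tS; rewrite (ht _).1 => /eqP; rewrite K (ht _).1 cxl => /eqP E'.
      by move: ne; rewrite E' eqxx.
    have tS : t (c x) \in S by rewrite !inE imset_f ?orbT // !inE.
    have h1 := agree _ tS; rewrite (ht _).1 in h1.
    by rewrite -h1; apply/eqP; rewrite K (ht _).1 eqxx.
  have aS : t i \in S by rewrite !inE imset_f ?orbT // !inE.
  have bS : b \in S by rewrite !inE eqxx.
  have : c'' (t i) == c'' b by rewrite (agree _ aS) (agree _ bS) (ht _).1.
  rewrite K kc' !c't => /eqP E'.
  by move: il; rewrite E' eqxx.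
move=> S' /properP [sS' [w wS wS']] det.
have agreeW : forall c3 : {ffun T -> 'I_k}, (forall s, s \in S -> s != w -> c3 s = c s) ->
    forall s, s \in S' -> c3 s = c s.
  move=> c3 h s sinS'; apply: h; first exact: (subsetP sS').
  by apply/eqP => E; move: wS'; rewrite -E sinS'.
case: (inS w wS) => [wb|[j jl wt]].
  have ag : forall s, s \in S -> s != w -> c' s = c s.
    move=> s sS sw; case: (inS s sS) => [sb|[m _ ->]]; first by move: sw; rewrite sb wb eqxx.
    by rewrite c't (ht m).1.
  by move: cb; rewrite (det c' c'P (agreeW c' ag)) eqxx.
case: (eqVneq j i) => [ji|ji].
  pose c3 := [ffun x => swp i l (c' x)].
  have c3P : proper_colouring e c3 := comp_proper (@swp_inj k i l) c'P.
  have ag : forall s, s \in S -> s != w -> c3 s = c s.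
    move=> s sS sw; rewrite ffunE; case: (inS s sS) => [->|[m ml sm]]; last rewrite sm.
      have li : (l == i) = false by rewrite eq_sym (negbTE il).
      by rewrite /swp -/l li eqxx.
    rewrite c't (ht m).1 /swp (negbTE ml).
    have -> : (m == i) = false by apply/negbTE/negP => /eqP mi; move: sw; rewrite sm mi wt ji eqxx.
    by [].
  have E := det c3 c3P (agreeW c3 ag).
  have := congr1 (fun h : {ffun T -> 'I_k} => h (t i)) E.
  rewrite /= ffunE c't (ht i).1 /swp eqxx => /eqP; by rewrite eq_sym (negbTE il).
pose c3 := [ffun x => swp j l (c x)].
have c3P : proper_colouring e c3 := comp_proper (@swp_inj k j l) cP.
have ag : forall s, s \in S -> s != w -> c3 s = c s.
  move=> s sS sw; rewrite ffunE; case: (inS s sS) => [->|[m ml sm]]; last rewrite sm.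
    rewrite /swp -/i.
    have -> : (i == j) = false by rewrite eq_sym (negbTE ji).
    by rewrite (negbTE il).
  rewrite (ht m).1 /swp (negbTE ml).
  have -> : (m == j) = false by apply/negbTE/negP => /eqP mj; move: sw; rewrite sm mj wt eqxx.
  by [].
have E := det c3 c3P (agreeW c3 ag).
have := congr1 (fun h : {ffun T -> 'I_k} => h (t j)) E.
rewrite /= ffunE (ht j).1 /swp eqxx => /eqP; by rewrite eq_sym (negbTE jl).
Qed.
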